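(* Let $\mathbf P=(P,\leq,{}',0,1)$ be a finite orthomodular poset which is not a lattice. Then its Dedekind-MacNeille completion $\mathrm{DM}(\mathbf P)$ is not orthomodular.
   Context: For $M\subseteq P$, $U(M)$, $L(M)$ are the sets of upper and lower bounds. A poset with complementation is a bounded poset with antitone involution $'$ ($x\le y\Rightarrow y'\le x'$, $x''=x$) with $L(\{x,x'\})=\{0\}$, $U(\{x,x'\})=\{1\}$. It is an orthomodular poset if for all $x\le y'$ the join $x\vee y$ exists and $((x\vee y)\wedge y')\vee y= x\vee y$ whenever defined (with $x\wedge y=(x'\vee y')'$). The Dedekind-MacNeille completion $\mathrm{DM}(\mathbf P)$ is the complete lattice of subsets $B\subseteq P$ with $L(U(B))=B$ under inclusion, with antitone involution $X'=L(\{u'\mid u\in X\})$; a lattice with complementation is orthomodular if $x\vee y=((x\vee y)\wedge y')\vee y$ for all $x,y$. *)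

(* Defs.v *)
From mathcomp Require Import all_boot.
Set Implicit Arguments. Unset Strict Implicit. Unset Printing Implicit Defensive.

Section Defs.
Variables (T : finType) (le : rel T).

Definition ubs (M : {set T}) : {set T} := [set u | [forall m in M, le m u]].
Definition lbs (M : {set T}) : {set T} := [set l | [forall m in M, le l m]].

Definition is_poset : Prop :=
  (forall x, le x x) /\ (forall x y, le x y -> le y x -> x = y) /\
  (forall x y w, le x y -> le y w -> le x w).

Definition bounded (z o : T) : Prop := forall x, le z x /\ le x o.

Definition is_join (x y j : T) : Prop :=
  j \in ubs [set x; y] /\ forall u, u \in ubs [set x; y] -> le j u.
Definition is_glb (x y m : T) : Prop :=
  m \in lbs [set x; y] /\ forall l, l \in lbs [set x; y] -> le l m.

Definition is_lattice : Prop :=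
  forall x y, (exists j, is_join x y j) /\ (exists m, is_glb x y m).

Variables (c : T -> T) (z o : T).

Definition poset_with_complementation : Prop :=
  is_poset /\ bounded z o /\
  (forall x y, le x y -> le (c y) (c x)) /\ (forall x, c (c x) = x) /\
  (forall x, lbs [set x; c x] = [set z]) /\ (forall x, ubs [set x; c x] = [set o]).

Definition is_meet (x y m : T) : Prop := is_join (c x) (c y) (c m).

Definition orthomodular_poset : Prop :=
  poset_with_complementation /\
  forall x y, le x (c y) ->
    (exists j, is_join x y j) /\
    (forall j m k, is_join x y j -> is_meet j (c y) m -> is_join m y k -> k = j).

(* Dedekind-MacNeille completion: closed subsets B with L(U(B)) = B,
   ordered by inclusion, with involution X' = L({u' | u in X}). *)
Definition DM_closed (B : {set T}) : Prop := lbs (ubs B) = B.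
Definition DM_compl (X : {set T}) : {set T} := lbs (c @: X).

Definition DM_is_join (X Y J : {set T}) : Prop :=
  DM_closed J /\ X \subset J /\ Y \subset J /\
  forall K, DM_closed K -> X \subset K -> Y \subset K -> J \subset K.
Definition DM_is_meet (X Y M : {set T}) : Prop :=
  DM_closed M /\ M \subset X /\ M \subset Y /\
  forall K, DM_closed K -> K \subset X -> K \subset Y -> K \subset M.

(* DM(P) is orthomodular: x \/ y = ((x \/ y) /\ y') \/ y for all x, y in DM(P) *)
Definition DM_orthomodular : Prop :=
  forall X Y J M K, DM_closed X -> DM_closed Y ->
    DM_is_join X Y J -> DM_is_meet J (DM_compl Y) M -> DM_is_join M Y K ->
    K = J.

End Defs.

(* Main.v *)
Require Import Defs.
From mathcomp Require Import all_boot.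
From Stdlib Require Import Classical.

Set Implicit Arguments. Unset Strict Implicit. Unset Printing Implicit Defensive.

Section H.
Variables (T : finType) (le : rel T).

Lemma lbsP (S : {set T}) l : reflect (forall m, m \in S -> le l m) (l \in lbs le S).
Proof. by rewrite inE; apply: (iffP forall_inP). Qed.
Lemma ubsP (S : {set T}) u : reflect (forall m, m \in S -> le m u) (u \in ubs le S).
Proof. by rewrite inE; apply: (iffP forall_inP). Qed.

Lemma lbs_closed (S : {set T}) : DM_closed le (lbs le S).
Proof.
apply/setP=> t; apply/idP/idP.
- move/lbsP=> H; apply/lbsP=> s Hs; apply: H; apply/ubsP=> l /lbsP; exact.
- move=> Ht; apply/lbsP=> u /ubsP Hu; exact: Hu.
Qed.

Lemma lbsU (S S' : {set T}) : lbs le S :&: lbs le S' = lbs le (S :|: S').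
Proof.
apply/setP=> t; rewrite inE; apply/andP/idP.
- by case=> /lbsP H1 /lbsP H2; apply/lbsP=> m; rewrite inE => /orP[/H1|/H2].
- move/lbsP=> H; split; apply/lbsP=> m Hm; apply: H; by rewrite inE Hm ?orbT.
Qed.
End H.

Theorem corollary2 (T : finType) (le : rel T) (c : T -> T) (z o : T) :
  orthomodular_poset le c z o -> ~ is_lattice le -> ~ DM_orthomodular le c.
Proof.
move=> [[[Hrefl [Hanti Htrans]] [_ [Hcle [Hcc _]]]] HOM] Hnl HDM.
have [a [b Hab]] : exists a b, ~ exists j, is_join le a b j.
  apply: NNPP => Hn; apply: Hnl => x y; split.
  - by apply: NNPP => H; apply: Hn; exists x, y.
  - have [j [/ubsP Hj1 Hj2]] : exists j, is_join le (c x) (c y) j.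
      by apply: NNPP => H; apply: Hn; exists (c x), (c y).
    exists (c j); split.
    + apply/lbsP=> m; rewrite !inE => /orP[]/eqP->.
      * by rewrite -[x]Hcc; apply: (Hcle); apply: (Hj1); rewrite !inE eqxx.
      * by rewrite -[y]Hcc; apply: (Hcle); apply: (Hj1); rewrite !inE eqxx orbT.
    + move=> l /lbsP Hl; rewrite -[l]Hcc; apply: (Hcle); apply: Hj2.
      apply/ubsP=> m; rewrite !inE => /orP[]/eqP->; apply: (Hcle); apply: Hl;
        by rewrite !inE eqxx ?orbT.
set X := lbs le (ubs le [set a; b]).
have aX : a \in X.
  by apply/lbsP=> u /ubsP; apply; rewrite !inE eqxx.
pose m := [arg min_(i < a in X) #|[set u | le i u]|].
have [mX mmax] : m \in X /\ forall j, j \in X -> le m j -> j = m.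
  rewrite /m; case: arg_minnP => // i iX imin; split => // j jX hij.
  have sub : [set u | le j u] \subset [set u | le i u].
    by apply/subsetP=> u; rewrite !inE => /(Htrans _ _ _ hij).
  have := imin j jX => hle.
  have eq : [set u | le j u] = [set u | le i u].
    by apply/eqP; rewrite eqEcard sub hle.
  have : i \in [set u | le j u] by rewrite eq inE Hrefl.
  rewrite inE => hji; exact: Hanti.
set Y := lbs le [set m].
set M := X :&: DM_compl le c Y.
have Mcl : DM_closed le M by rewrite /M /DM_compl lbsU; apply: lbs_closed.
have YX : Y \subset X.
  apply/subsetP=> t /lbsP Ht; apply/lbsP=> u Hu.
  apply: (Htrans _ m); first by apply: Ht; rewrite inE.
  by move/lbsP: (mX); apply.
have MY : M \subset Y.
  apply/subsetP=> t; rewrite inE => /andP[tX /lbsP tc].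
  have tcm : le t (c m).
    by apply: tc; apply/imsetP; exists m => //; apply/lbsP=> u; rewrite inE => /eqP->.
  have [[j [/ubsP Hj1 Hj2]] _] := HOM t m tcm.
  have jX : j \in X.
    apply/lbsP=> u Hu; apply: Hj2; apply/ubsP=> v; rewrite !inE => /orP[]/eqP->.
    - by move/lbsP: tX; apply.
    - by move/lbsP: (mX); apply.
  have jm : j = m by apply: mmax => //; apply: (Hj1); rewrite !inE eqxx orbT.
  apply/lbsP=> u; rewrite inE => /eqP->; rewrite -jm; apply: (Hj1).
  by rewrite !inE eqxx.
have YXeq : Y = X.
  apply: (HDM X Y X M Y); try exact: lbs_closed.
  - split; first exact: lbs_closed. split; first exact: subxx.
    split; first exact: YX. by move=> K _ HK _.
  - split => //. split; first exact: subsetIl. split; first exact: subsetIr.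
    by move=> K _ HK1 HK2; rewrite subsetI HK1 HK2.
  - split; first exact: lbs_closed. split; first exact: MY.
    split; first exact: subxx. by move=> K _ _ HK.
apply: Hab; exists m; split.
- apply/ubsP=> v; rewrite !inE => /orP[]/eqP-> ; [have : a \in Y by rewrite YXeq
  | have : b \in Y by rewrite YXeq; apply/lbsP=> u /ubsP; apply; rewrite !inE eqxx orbT];
  by move/lbsP; apply; rewrite inE.
- by move=> u Hu; move/lbsP: (mX); apply.
Qed.
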